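(* Let $\mathbb{F}_q$ have characteristic $p$, let $n,v\ge1$, $\mathcal{R}=\mathbb{F}_q[x_1,\dots,x_v]/\langle x_1^{i_1}\cdots x_v^{i_v}\mid i_1+\dots+i_v=n\rangle$, and let $l\in\{1,\dots,v\}$. Then \[ \mathbb{E}_{\chi\in\widehat{\mathcal{R}_\times}}\left[\left|\sum_{a\in\mathbb{F}_q^*}\chi(x_l-a)\right|\right]\le\frac{q-1}{\sqrt{p-1}}, \] where the expectation is over $\chi$ chosen uniformly from all characters of the unit group $\mathcal{R}_\times$.
   Context: For $a\in\mathbb{F}_q^*$, $x_l-a$ is a unit of $\mathcal{R}$. $\widehat{\mathcal{R}_\times}$ denotes the group of homomorphisms from $\mathcal{R}_\times$ to the complex unit circle. *)

(* Defs.v *)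
From HB Require Import structures.
From mathcomp Require Import all_boot all_order all_algebra all_field.
From mathcomp Require Import mpoly.
Set Implicit Arguments. Unset Strict Implicit. Unset Printing Implicit Defensive.
Import Order.TTheory GRing.Theory Num.Theory.
Local Open Scope ring_scope.

(* The ring R = F[x_1..x_v] / < all monomials of total degree n >, realized
   as its standard model: F-linear combinations of the monomials of total
   degree < n, multiplied as polynomials with all monomials of degree >= n
   discarded. *)

Definition TMon (v n : nat) := 'X_{1..v < n}.

Definition TR (F : finFieldType) (v n : nat) := {ffun TMon v n -> F}.

Definition tr_mul (F : finFieldType) (v n : nat) (f g : TR F v n) : TR F v n :=
  [ffun m : TMon v n => \sum_(m1 : TMon v n) \sum_(m2 : TMon v n |
       ((m1 : 'X_{1..v}) + (m2 : 'X_{1..v}) == (m : 'X_{1..v}))%MM) f m1 * g m2].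

Definition tr_const (F : finFieldType) (v n : nat) (a : F) : TR F v n :=
  [ffun m : TMon v n => if (m : 'X_{1..v}) == 0%MM then a else 0].

Definition tr_one (F : finFieldType) (v n : nat) : TR F v n := tr_const v n 1.

Definition tr_var (F : finFieldType) (v n : nat) (l : 'I_v) : TR F v n :=
  [ffun m : TMon v n => if (m : 'X_{1..v}) == U_(l)%MM then 1 else 0].

Definition tr_sub (F : finFieldType) (v n : nat) (f g : TR F v n) : TR F v n :=
  [ffun m => f m - g m].

Definition tr_unit (F : finFieldType) (v n : nat) (f : TR F v n) : bool :=
  [exists g : TR F v n, tr_mul f g == tr_one F v n].

Definition TUnits (F : finFieldType) (v n : nat) := {f : TR F v n | tr_unit f}.

Definition is_character (F : finFieldType) (v n : nat)
    (chi : {ffun TUnits F v n -> algC}) : Prop :=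
  (forall a b c : TUnits F v n, val c = tr_mul (val a) (val b) ->
      chi c = chi a * chi b) /\
  (forall a : TUnits F v n, `|chi a| = 1).

(* evaluation of a character at an element of R (0 off the units; only
   used at units) *)
Definition ev_char (F : finFieldType) (v n : nat)
    (chi : {ffun TUnits F v n -> algC}) (r : TR F v n) : algC :=
  if @insub _ (@tr_unit F v n) (TUnits F v n) r is Some u then chi u else 0.

(* Main.v *)
Require Import Defs.
From HB Require Import structures.
From mathcomp Require Import all_boot all_order all_algebra all_field.
From mathcomp Require Import mpoly.
From mathcomp Require Import all_fingroup all_solvable all_character.
Import Order.TTheory GRing.Theory Num.Theory.
Local Open Scope ring_scope.



Section TR.
Variables (F : finFieldType) (v n : nat).
Local Notation TM := (TMon v n).
Local Notation R := (TR F v n).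

Lemma tr_mulE (f g : R) m : tr_mul f g m =
  \sum_(m1 : TM) \sum_(m2 : TM) (if ((m1 : 'X_{1..v}) + m2 == m)%MM then f m1 * g m2 else 0).
Proof. rewrite ffunE; apply: eq_bigr => m1 _; exact: big_mkcond. Qed.

Lemma elim_mid (a b c m : TM) (X : F) :
  \sum_(k : TM) (if ((k : 'X_{1..v}) + c == m)%MM then (if ((a : 'X_{1..v}) + b == k)%MM then X else 0) else 0)
  = if ((a : 'X_{1..v}) + b + c == m)%MM then X else 0.
Proof.
case: ifP => [/eqP H|H].
  have hk : (mdeg ((a : 'X_{1..v}) + b) < n)%N.
    apply: leq_ltn_trans (bmdeg m); by rewrite -H [mdeg (_ + c)]mdegD leq_addr.
  rewrite (bigD1 (BMultinom hk)) //= H eqxx eqxx big1 ?addr0 // => k /negbTE hk'.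
  case: ifP => // /eqP Hk; case: ifP => // /eqP Hab.
  have E : k = BMultinom hk by apply: val_inj; rewrite /= Hab.
  by rewrite E eqxx in hk'.
rewrite big1 // => k _; case: ifP => // /eqP Hk; case: ifP => // /eqP Hab.
by move: H; rewrite Hab Hk eqxx.
Qed.

Lemma tr_mulC : commutative (@tr_mul F v n).
Proof.
move=> f g; apply/ffunP => m; rewrite !tr_mulE exchange_big /=.
apply: eq_bigr => a _; apply: eq_bigr => b _; by rewrite addmC mulrC.
Qed.

Lemma push_l (P : bool) (x : TM -> TM -> F) (y : F) :
  (if P then (\sum_(a : TM) \sum_(b : TM) x a b) * y else 0)
  = \sum_(a : TM) \sum_(b : TM) (if P then x a b * y else 0).
Proof.
case: P; last by rewrite big1 // => a _; rewrite big1.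
rewrite mulr_suml; apply: eq_bigr => a _; rewrite mulr_suml; apply: eq_bigr => b _ //.
Qed.

Lemma push_r (P : bool) (x : TM -> TM -> F) (y : F) :
  (if P then y * (\sum_(a : TM) \sum_(b : TM) x a b) else 0)
  = \sum_(a : TM) \sum_(b : TM) (if P then y * x a b else 0).
Proof.
case: P; last by rewrite big1 // => a _; rewrite big1.
rewrite mulr_sumr; apply: eq_bigr => a _; rewrite mulr_sumr; apply: eq_bigr => b _ //.
Qed.

Lemma ifmul (b : bool) (x y : F) : (if b then x else 0) * y = if b then x * y else 0.
Proof. by case: b; rewrite ?mul0r. Qed.
Lemma mulif (b : bool) (x y : F) : y * (if b then x else 0) = if b then y * x else 0.
Proof. by case: b; rewrite ?mulr0. Qed.

Lemma elim_mid' (a b c m : TM) (X : F) :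
  \sum_(k : TM) (if ((a : 'X_{1..v}) + k == m)%MM then (if ((b : 'X_{1..v}) + c == k)%MM then X else 0) else 0)
  = if ((a : 'X_{1..v}) + b + c == m)%MM then X else 0.
Proof.
rewrite -[in RHS]addmA [X in (X == _)%MM]addmC -elim_mid.
by apply: eq_bigr => k _; rewrite addmC.
Qed.

Lemma tr_mulA : associative (@tr_mul F v n).
Proof.
move=> f g h; apply/ffunP => m; rewrite !tr_mulE.
under [RHS]eq_bigr => k _ do under eq_bigr => c _ do rewrite tr_mulE push_l.
under [LHS]eq_bigr => a _ do under eq_bigr => k _ do rewrite tr_mulE push_r.
rewrite [RHS]exchange_big /=.
under [RHS]eq_bigr => c _ do rewrite exchange_big /=.
under [RHS]eq_bigr => c _ do under eq_bigr => a _ do rewrite exchange_big /=.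
under [RHS]eq_bigr => c _ do under eq_bigr => a _ do under eq_bigr => b _ do
  (under eq_bigr => i _ do rewrite ifmul; rewrite elim_mid).
under [LHS]eq_bigr => a _ do rewrite exchange_big /=.
under [LHS]eq_bigr => a _ do under eq_bigr => b _ do rewrite exchange_big /=.
under [LHS]eq_bigr => a _ do under eq_bigr => b _ do under eq_bigr => c _ do
  (under eq_bigr => i _ do rewrite mulif; rewrite elim_mid').
rewrite [RHS]exchange_big /=; apply: eq_bigr => a _.
rewrite [RHS]exchange_big /=; apply: eq_bigr => b _; apply: eq_bigr => c _.
by rewrite mulrA.
Qed.

Lemma tr_mul1 : left_id (tr_one F v n) (@tr_mul F v n).
Proof.
move=> g; apply/ffunP => m; rewrite tr_mulE.
have n0 : (mdeg (0%MM : 'X_{1..v}) < n)%N by rewrite mdeg0 (leq_ltn_trans _ (bmdeg m)).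
rewrite (bigD1 (BMultinom n0)) //= [X in _ + X]big1 ?addr0.
  rewrite -big_mkcond /= (big_pred1 m) ?ffunE /= ?eqxx ?mul1r // => b.
  by rewrite /= add0m; exact: val_eqE.
move=> a ha; apply: big1 => b _; rewrite ffunE.
have -> : ((a : 'X_{1..v}) == 0%MM) = false.
  apply/negbTE; apply: contra ha => /eqP h; apply/eqP/val_inj; rewrite /= h //.
by rewrite mul0r if_same.
Qed.


Definition TU : Type := TUnits F v n.
HB.instance Definition _ := Finite.on TU.

Lemma tr_one_unit : tr_unit (tr_one F v n).
Proof. by apply/existsP; exists (tr_one F v n); rewrite tr_mul1. Qed.

Lemma unit_mul (u w : TU) : tr_unit (tr_mul (val u) (val w)).
Proof.
case/existsP: (valP u) => gu /eqP hu; case/existsP: (valP w) => gw /eqP hw.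
apply/existsP; exists (tr_mul gu gw); apply/eqP.
have -> : tr_mul (tr_mul (val u) (val w)) (tr_mul gu gw) =
    tr_mul (tr_mul (val u) gu) (tr_mul (val w) gw).
  by rewrite -!tr_mulA; congr tr_mul; rewrite !tr_mulA (tr_mulC (val w) gu).
by rewrite hu hw tr_mul1.
Qed.

Definition tu_inv_val (u : TU) : R := xchoose (existsP (valP u)).
Lemma tu_inv_spec (u : TU) : tr_mul (val u) (tu_inv_val u) = tr_one F v n.
Proof. exact/eqP/(xchooseP (existsP (valP u))). Qed.

Lemma tu_inv_unit (u : TU) : tr_unit (tu_inv_val u).
Proof. by apply/existsP; exists (val u); rewrite tr_mulC tu_inv_spec. Qed.

Definition tu_mul (u w : TU) : TU := exist _ (tr_mul (val u) (val w)) (unit_mul u w).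
Definition tu_one : TU := exist _ (tr_one F v n) tr_one_unit.
Definition tu_inv (u : TU) : TU := exist _ (tu_inv_val u) (tu_inv_unit u).

Lemma tu_mulA : associative tu_mul.
Proof. by move=> a b c; apply: val_inj; rewrite /= tr_mulA. Qed.
Lemma tu_mul1 : left_id tu_one tu_mul.
Proof. by move=> a; apply: val_inj; rewrite /= tr_mul1. Qed.
Lemma tu_mulV : left_inverse tu_one tu_inv tu_mul.
Proof. by move=> a; apply: val_inj; rewrite /= tr_mulC tu_inv_spec. Qed.

HB.instance Definition _ := Finite_isGroup.Build TU tu_mulA tu_mul1 tu_mulV.

Lemma TU_abelian : abelian [set: TU].
Proof.
apply/centsP => x _ y _; apply: val_inj => /=; exact: tr_mulC.
Qed.

Lemma separate (x y : TU) : x != y ->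
  exists chi : {ffun TUnits F v n -> algC}, is_character chi /\ chi x != chi y.
Proof.
move=> xy.
set G := [set: TU].
have lin := char_abelianP _ TU_abelian.
set z := (x * y^-1)%g.
have z1 : z != 1%g.
  apply: contra xy => /eqP h; apply/eqP.
  by rewrite -(mulgKV y x) -/z h mul1g.
have : exists i : Iirr G, 'chi_i z != 1.
  apply/existsP; apply: contraT; rewrite negb_exists => /forallP all1.
  have := second_orthogonality_relation z (group1 G).
  rewrite class1G inE (negbTE z1) mulr0n.
  under eq_bigr => i _ do rewrite lin_char1 ?lin // conjC1 mulr1 (eqP (negbNE (all1 i))).
  have Ngt0 : (0 < Nirr G)%N by apply: (leq_ltn_trans _ (ltn_ord (0 : Iirr G))).
  rewrite sumr_const card_ord => /eqP.
  by rewrite pnatr_eq0 eqn0Ngt Ngt0.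
case=> i hi.
have Li := lin i.
exists [ffun u : TUnits F v n => 'chi_i (u : TU)]; split; first split.
- move=> a b c hc; rewrite !ffunE.
  have -> : (c : TU) = ((a : TU) * (b : TU))%g by apply: val_inj.
  by rewrite lin_charM // inE.
- by move=> a; rewrite ffunE normC_lin_char // inE.
rewrite !ffunE; apply: contra hi => /eqP h.
have hx : x = (z * y)%g by rewrite /z mulgKV.
have hy : 'chi_i y != 0 by rewrite lin_char_neq0 // inE.
move: h; rewrite hx lin_charM ?inE // => h.
by apply/eqP; apply: (mulIf hy); rewrite mul1r.
Qed.

End TR.



Lemma p_le_card (F : finFieldType) (p : nat) (hchar : p \in [pchar F]) : (p <= #|F|)%N.
Proof.
have key : forall i j : nat, (i <= j)%N -> (j < p)%N -> i%:R = j%:R :> F -> i = j.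
  move=> i j hij hjp h.
  have : (p %| j - i)%N by rewrite (dvdn_pcharf hchar) natrB // h subrr.
  have [e|hpos] := eqVneq (j - i)%N 0%N.
    by move=> _; apply/eqP; rewrite eqn_leq hij /= -subn_eq0 e.
  move/(dvdn_leq _); rewrite lt0n hpos => /(_ isT) hle.
  have : (j - i < p)%N by apply: leq_ltn_trans (leq_subr _ _) hjp.
  by rewrite ltnNge hle.
have inj : injective (fun i : 'I_p => (i : nat)%:R : F).
  move=> i j /= h; apply: val_inj => /=.
  have [hij|hji] := leqP i j; first exact: key hij (ltn_ord j) h.
  by symmetry; apply: key (ltnW hji) (ltn_ord i) (esym h).
by have := leq_card _ inj; rewrite card_ord.
Qed.



Lemma sum1_seq (T : Type) (s : seq T) : \sum_(x <- s) (1 : algC) = (size s)%:R.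
Proof. by elim: s => [|x s IH]; rewrite ?big_nil // big_cons IH /= -natr1 addrC. Qed.

Lemma orth (F : finFieldType) (v n : nat) (s : seq {ffun TUnits F v n -> algC})
  (hs_uniq : uniq s) (hs_all : forall chi, chi \in s <-> is_character chi)
  (g h : TUnits F v n) :
  \sum_(chi <- s) chi g * (chi h)^* = if g == h then (size s)%:R else 0.
Proof.
case: eqVneq => [<-|gh].
  rewrite -(@sum1_seq _ s); apply: eq_big_seq => chi /hs_all [_ hn].
  by rewrite -normCK hn expr1n.
have [chi0 [[hm0 hn0] hsep]] := @separate F v n g h gh.
pose mulc (chi : {ffun TUnits F v n -> algC}) := [ffun u => chi0 u * chi u].
have charc : forall chi, is_character chi -> is_character (mulc chi).
  move=> chi [hm hn]; split.
    by move=> a b c hc; rewrite !ffunE (hm0 a b c hc) (hm a b c hc) mulrACA.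
  by move=> a; rewrite ffunE normrM hn0 hn mulr1.
have injc : injective mulc.
  move=> a b /ffunP e; apply/ffunP => u; have := e u; rewrite !ffunE.
  apply: mulfI; by rewrite -normr_eq0 hn0 oner_eq0.
have uniqm : uniq (map mulc s) by rewrite map_inj_uniq.
have hperm : perm_eq s (map mulc s).
  apply: uniq_perm => //.
  have sub : {subset map mulc s <= s}.
    by move=> x /mapP [chi /hs_all hc ->]; apply/hs_all; exact: charc.
  have [_ eqs] := uniq_min_size uniqm sub (eq_leq (esym (size_map mulc s))).
  by move=> x; rewrite eqs.
set c := chi0 g * (chi0 h)^*.
have c1 : c != 1.
  apply: contra hsep => /eqP hc; apply/eqP.
  have : c * chi0 h = chi0 h by rewrite hc mul1r.
  by rewrite /c -mulrA -normCKC hn0 expr1n mulr1.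
set S := \sum_(chi <- s) chi g * (chi h)^*.
have E : S = c * S.
  rewrite {1}/S (perm_big _ hperm) big_map mulr_sumr; apply: eq_bigr => chi _.
  by rewrite !ffunE rmorphM /= mulrACA.
have : (1 - c) * S = 0 by rewrite mulrBl mul1r -E subrr.
by move/eqP; rewrite mulf_eq0 subr_eq0 eq_sym (negbTE c1) /= => /eqP.
Qed.



Lemma sumc_seq (T : Type) (s : seq T) (k : algC) : \sum_(x <- s) k = k * (size s)%:R.
Proof.
elim: s => [|x s IH]; rewrite ?big_nil ?mulr0 // big_cons IH /= -natr1 mulrDr mulr1 addrC //.
Qed.

Lemma avg_bound (I : Type) (s : seq I) (x : I -> algC) (Q : algC) :
  0 < Q -> (forall i, 0 <= x i) ->
  \sum_(i <- s) x i ^+ 2 <= (size s)%:R * Q ->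
  (\sum_(i <- s) x i) / (size s)%:R <= sqrtC Q.
Proof.
move=> Q0 x0 hsq.
set c := sqrtC Q.
have c0 : 0 < c by rewrite sqrtC_gt0.
have cQ : c ^+ 2 = Q by rewrite sqrtCK.
have h1 : \sum_(i <- s) (x i * c) *+ 2 <= \sum_(i <- s) (x i ^+ 2 + c ^+ 2).
  apply: ler_sum => i _.
  exact: (real_leif_mean_square_scaled (ger0_real (x0 i)) (ger0_real (ltW c0))).
rewrite [X in _ <= X]big_split /= (@sumc_seq _ s) cQ sumrMnl -mulr_suml in h1.
have h2 : (\sum_(i <- s) x i) * c <= (size s)%:R * Q.
  have h3 : ((\sum_(i <- s) x i) * c) *+ 2 <= ((size s)%:R * Q) *+ 2.
    apply: le_trans h1 _; rewrite mulr2n [Q * _]mulrC lerD2r //.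
  by move: h3; rewrite lerMn2r.
have [s0|spos] := eqVneq (size s) 0%N.
  by rewrite s0 invr0 mulr0 ltW.
have N0 : 0 < (size s)%:R :> algC by rewrite ltr0n lt0n.
rewrite ler_pdivrMr // -(ler_pM2r c0) (le_trans h2) //.
by rewrite -cQ expr2 mulrCA mulrA.
Qed.



Lemma U_inj (F : finFieldType) (n v : nat) (hn : (0 < n)%N) (l : 'I_v) (a b : F) :
  tr_sub (tr_var F n l) (tr_const v n a) = tr_sub (tr_var F n l) (tr_const v n b) -> a = b.
Proof.
have n0 : (mdeg (0%MM : 'X_{1..v}) < n)%N by rewrite mdeg0.
move/ffunP/(_ (BMultinom n0)); rewrite !ffunE /= eq_sym mnm1_eq0 eqxx.
by rewrite !sub0r => /oppr_inj.
Qed.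

Lemma inner (F : finFieldType) (n v : nat) (hn : (0 < n)%N) (l : 'I_v)
  (s : seq {ffun TUnits F v n -> algC}) (hs_uniq : uniq s)
  (hs_all : forall chi, chi \in s <-> is_character chi) (a b : F) :
  \sum_(chi <- s) ev_char chi (tr_sub (tr_var F n l) (tr_const v n a)) *
     (ev_char chi (tr_sub (tr_var F n l) (tr_const v n b)))^*
  = if (a == b) && tr_unit (tr_sub (tr_var F n l) (tr_const v n a)) then (size s)%:R else 0.
Proof.
rewrite /ev_char.
case: insubP => [ua hua ea|nua]; case: insubP => [ub hub eb|nub].
- rewrite orth // hua andbT; congr (if _ then _ else _).
  rewrite -val_eqE ea eb; apply/eqP/eqP => [/U_inj|->] //; exact.
- rewrite big1 => [|chi _]; last by rewrite conjC0 mulr0.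
  case: (eqVneq a b) => [eab|] //=; subst b; by rewrite hua in nub.
- by rewrite big1 => [|chi _]; rewrite ?mul0r // (negbTE nua) andbF.
- by rewrite big1 => [|chi _]; rewrite ?mul0r // (negbTE nua) andbF.
Qed.

Theorem lemma6p14 (F : finFieldType) (p : nat) (hp : prime p)
    (hchar : p \in [pchar F]) (n v : nat) (hn : (0 < n)%N) (hv : (0 < v)%N)
    (l : 'I_v) (s : seq {ffun TUnits F v n -> algC}) (hs_uniq : uniq s)
    (hs_all : forall chi, chi \in s <-> is_character chi) :
  (\sum_(chi <- s)
      `| \sum_(a : F | a != 0) ev_char chi (tr_sub (tr_var F n l) (tr_const v n a)) |)
    / (size s)%:R
  <= (#|F|.-1)%:R / sqrtC (p.-1)%:R.
Proof.
have pF := @p_le_card F p hchar.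
have p1 := prime_gt1 hp.
have Qpos : 0 < (#|F|.-1)%:R :> algC.
  by rewrite ltr0n -subn1 subn_gt0 (leq_trans p1 pF).
have Ppos : 0 < (p.-1)%:R :> algC by rewrite ltr0n -subn1 subn_gt0.
have key : \sum_(chi <- s)
      `| \sum_(a : F | a != 0) ev_char chi (tr_sub (tr_var F n l) (tr_const v n a)) | ^+ 2
     <= (size s)%:R * (#|F|.-1)%:R.
  under eq_bigr => chi _ do rewrite normCK rmorph_sum mulr_suml.
  under eq_bigr => chi _ do under eq_bigr => a _ do rewrite mulr_sumr.
  rewrite exchange_big /=.
  under eq_bigr => a _ do rewrite exchange_big /=.
  under eq_bigr => a _ do under eq_bigr => b _ do rewrite (@inner F n v hn l s hs_uniq hs_all).
  have hb : forall a : F, a != 0 -> \sum_(b : F | b != 0)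
      (if (a == b) && tr_unit (tr_sub (tr_var F n l) (tr_const v n a)) then (size s)%:R else 0)
      <= (size s)%:R :> algC.
    move=> a ha; rewrite (bigD1 a) //= eqxx /= big1 ?addr0 => [|b /andP[_ hba]].
      by case: tr_unit => //; rewrite ler0n.
    by rewrite eq_sym (negbTE hba).
  apply: le_trans (ler_sum _ hb) _.
  rewrite sumr_const.
  have -> : #|[pred a : F | a != 0]| = #|F|.-1 by exact: cardC1.
  by rewrite mulr_natr.
apply: le_trans (@avg_bound _ s (fun chi => `| \sum_(a : F | a != 0) ev_char chi (tr_sub (tr_var F n l) (tr_const v n a)) |) _ Qpos (fun chi => normr_ge0 _) key) _.
rewrite ler_pdivlMr ?sqrtC_gt0 //.
rewrite -{2}(sqrtCK (#|F|.-1)%:R) expr2 ler_wpM2l ?sqrtC_ge0 ?ler0n //.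
rewrite ler_sqrtC ?nnegrE ?ler0n // ler_nat -!subn1 leq_sub2r //.
Qed.
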